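(* Let $\varphi$ be a quantifier-free first-order formula in the language $\sigma^{bdo}_=$, and let $\varphi^{\circ}$ be the $\sigma^{bdbo}_=$-formula obtained from $\varphi$ by replacing every term of the form $\Diamond t$ by $t\circ 1$. Then $\varphi$ is satisfiable in some bdo if and only if $\varphi^{\circ}$ is satisfiable in some bdbo.
   Context: A bdo is an algebra $\langle A,\wedge,\vee,\Diamond,0,1,\leqslant\rangle$ where $\langle A,\wedge,\vee,0,1\rangle$ is a bounded distributive lattice with natural order $\leqslant$ and $\Diamond$ is unary with $\Diamond0=0$ and $\Diamond(x\vee y)=\Diamond x\vee\Diamond y$; $\sigma^{bdo}_=$ is its language with equality. A bdbo is an algebra $\langle A,\wedge,\vee,\circ,0,1,\leqslant\rangle$ where $\langle A,\wedge,\vee,0,1\rangle$ is a bounded distributive lattice with natural order $\leqslant$ and $\circ$ is binary with $x\circ0=0=0\circ x$, $x\circ(y\vee z)=(x\circ y)\vee(x\circ z)$, $(y\vee z)\circ x=(y\circ x)\vee(z\circ x)$; $\sigma^{bdbo}_=$ is its language with equality. A quantifier-free first-order formula is a Boolean combination of atomic formulas $s=t$, $s\leqslant t$; it is satisfiable in an algebra if true there under some valuation. *)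

(* Defs.v *)
(* bounded distributive lattices are mathcomp's
   tbDistrLatticeType (order.v); the natural order is Order.le. *)
From HB Require Import structures.
From mathcomp Require Import all_boot all_order.
Set Implicit Arguments. Unset Strict Implicit. Unset Printing Implicit Defensive.
Import Order.TTheory.
Local Open Scope order_scope.

Inductive tm_bdo : Type :=
| BV : nat -> tm_bdo
| BMeet : tm_bdo -> tm_bdo -> tm_bdo
| BJoin : tm_bdo -> tm_bdo -> tm_bdo
| BDia : tm_bdo -> tm_bdo
| BZero : tm_bdo
| BOne : tm_bdo.

Inductive tm_bdbo : Type :=
| CV : nat -> tm_bdbo
| CMeet : tm_bdbo -> tm_bdbo -> tm_bdbo
| CJoin : tm_bdbo -> tm_bdbo -> tm_bdbo
| CCirc : tm_bdbo -> tm_bdbo -> tm_bdbo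
| CZero : tm_bdbo
| COne : tm_bdbo.

Inductive qf (Tm : Type) : Type :=
| FEq : Tm -> Tm -> qf Tm
| FLe : Tm -> Tm -> qf Tm
| FTrue : qf Tm
| FFalse : qf Tm
| FNot : qf Tm -> qf Tm
| FAnd : qf Tm -> qf Tm -> qf Tm
| FOr : qf Tm -> qf Tm -> qf Tm
| FImp : qf Tm -> qf Tm -> qf Tm.

Definition is_bdo_op (d : Order.disp_t) (T : tbDistrLatticeType d)
  (dia : T -> T) : Prop :=
  dia \bot = \bot /\ (forall x y, dia (x `|` y) = dia x `|` dia y).

Definition is_bdbo_op (d : Order.disp_t) (T : tbDistrLatticeType d)
  (circ : T -> T -> T) : Prop :=
  (forall x, circ x \bot = \bot) /\ (forall x, circ \bot x = \bot) /\
  (forall x y z, circ x (y `|` z) = circ x y `|` circ x z) /\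
  (forall x y z, circ (y `|` z) x = circ y x `|` circ z x).

Fixpoint eval_bdo (d : Order.disp_t) (T : tbDistrLatticeType d)
  (dia : T -> T) (v : nat -> T) (t : tm_bdo) : T :=
  match t with
  | BV n => v n
  | BMeet a b => eval_bdo dia v a `&` eval_bdo dia v b
  | BJoin a b => eval_bdo dia v a `|` eval_bdo dia v b
  | BDia a => dia (eval_bdo dia v a)
  | BZero => \bot
  | BOne => \top
  end.

Fixpoint eval_bdbo (d : Order.disp_t) (T : tbDistrLatticeType d)
  (circ : T -> T -> T) (v : nat -> T) (t : tm_bdbo) : T :=
  match t with
  | CV n => v n
  | CMeet a b => eval_bdbo circ v a `&` eval_bdbo circ v b
  | CJoin a b => eval_bdbo circ v a `|` eval_bdbo circ v b
  | CCirc a b => circ (eval_bdbo circ v a) (eval_bdbo circ v b)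
  | CZero => \bot
  | COne => \top
  end.

Fixpoint holds (Tm : Type) (d : Order.disp_t) (T : tbDistrLatticeType d)
  (ev : Tm -> T) (phi : qf Tm) : Prop :=
  match phi with
  | FEq s t => ev s = ev t
  | FLe s t => ev s <= ev t
  | FTrue => True
  | FFalse => False
  | FNot p => ~ holds ev p
  | FAnd p q => holds ev p /\ holds ev q
  | FOr p q => holds ev p \/ holds ev q
  | FImp p q => holds ev p -> holds ev q
  end.

Fixpoint tr_tm (t : tm_bdo) : tm_bdbo :=
  match t with
  | BV n => CV n
  | BMeet a b => CMeet (tr_tm a) (tr_tm b)
  | BJoin a b => CJoin (tr_tm a) (tr_tm b)
  | BDia a => CCirc (tr_tm a) COne
  | BZero => CZero
  | BOne => COne
  end.

Fixpoint tr_fm (phi : qf tm_bdo) : qf tm_bdbo :=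
  match phi with
  | FEq s t => FEq (tr_tm s) (tr_tm t)
  | FLe s t => FLe (tr_tm s) (tr_tm t)
  | FTrue => FTrue _
  | FFalse => FFalse _
  | FNot p => FNot (tr_fm p)
  | FAnd p q => FAnd (tr_fm p) (tr_fm q)
  | FOr p q => FOr (tr_fm p) (tr_fm q)
  | FImp p q => FImp (tr_fm p) (tr_fm q)
  end.

Definition sat_bdo (phi : qf tm_bdo) : Prop :=
  exists (d : Order.disp_t) (T : tbDistrLatticeType d) (dia : T -> T),
    is_bdo_op dia /\ exists v : nat -> T, holds (eval_bdo dia v) phi.

Definition sat_bdbo (phi : qf tm_bdbo) : Prop :=
  exists (d : Order.disp_t) (T : tbDistrLatticeType d) (circ : T -> T -> T),
    is_bdbo_op circ /\ exists v : nat -> T, holds (eval_bdbo circ v) phi.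

(* Main.v *)
Require Import Defs.
From mathcomp Require Import all_boot all_order.
Import Order.TTheory.
Local Open Scope order_scope.

Lemma holds_tr (d : Order.disp_t) (T : tbDistrLatticeType d)
  (ev1 : tm_bdo -> T) (ev2 : tm_bdbo -> T) :
  (forall t, ev1 t = ev2 (tr_tm t)) ->
  forall phi, holds ev1 phi <-> holds ev2 (tr_fm phi).
Proof.
move=> H; elim=> /=; try (move=> *; rewrite !H; tauto); try tauto.
Qed.

Theorem lemma5p4 (phi : qf tm_bdo) : sat_bdo phi <-> sat_bdbo (tr_fm phi).
Proof.
split.
- move=> [d [T [dia [[H0 HJ] [v Hv]]]]].
  pose circ := fun x y : T => if y == \bot then \bot else dia x.
  have Hc : forall x, circ x \top = dia x.
    move=> x; rewrite /circ; case: eqP => // E.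
    have -> : x = \bot by apply/le_anti; rewrite le0x andbT -E lex1.
    by rewrite H0.
  exists d, T, circ; split.
  + split; [|split; [|split]].
    * by move=> x; rewrite /circ eqxx.
    * by move=> x; rewrite /circ H0; case: ifP.
    * move=> x y z; rewrite /circ.
      case: (y =P \bot) => [->|Hy]; first by rewrite !join0x.
      case: (z =P \bot) => [->|Hz]; first by rewrite !joinx0; case: eqP.
      case: eqP => [E|_]; last by rewrite joinxx.
      exfalso; apply: Hy; apply/le_anti; rewrite le0x andbT -E leUl.
      done.
    * move=> x y z; rewrite /circ; case: ifP => _; first by rewrite joinxx.
      by rewrite HJ.
  + exists v.
    have E : forall t, eval_bdo dia v t = eval_bdbo circ v (tr_tm t).
      elim=> //= [a IHa b IHb|a IHa b IHb|a IHa]; by rewrite ?IHa ?IHb ?Hc.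
    exact: (proj1 (@holds_tr _ _ _ _ E phi) Hv).
- move=> [d [T [circ [[H1 [H2 [H3 H4]]] [v Hv]]]]].
  exists d, T, (fun x => circ x \top); split.
  + split; [by rewrite H2 | by move=> x y; rewrite H4].
  + exists v.
    have E : forall t, eval_bdo (fun x => circ x \top) v t = eval_bdbo circ v (tr_tm t).
      elim=> //= [a IHa b IHb|a IHa b IHb|a IHa]; by rewrite ?IHa ?IHb.
    exact: (proj2 (@holds_tr _ _ _ _ E phi) Hv).
Qed.
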